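(* Let $f,g\in\mathcal{S}$ and $\tau\in\mathbb{C}$, $\tau\ne0$. (1) If $\beta:=\beta_f(\tau)>0$, $\varepsilon\in(0,\beta)$, and there is $r_0\in(0,1)$ with $\sup_{r_0<|z|<1}|N_g(z)-N_f(z)|(1-|z|^2)<\varepsilon/|\tau|$, then $|\beta_g(\tau)-\beta_f(\tau)|\le\varepsilon$. (2) If $\beta_f(\tau)=0$, $\varepsilon>0$, and there is $r_0\in(0,1)$ with $\sup_{r_0<|z|<1}|N_g(z)-N_f(z)|(1-|z|^2)<\varepsilon/|\tau|$, then $\beta_g(\tau)\le\varepsilon$.
   Context: $\Delta$ unit disk; $\mathcal{S}$ the class of univalent $f$ on $\Delta$ with $f(0)=0,f'(0)=1$; $N_f=f''/f'$. For $\tau\in\mathbb{C}$, $[f'(z)]^\tau=\exp(\tau\log f'(z))$ with $\log f'(0)=0$, and $\beta_f(\tau)=\limsup_{r\to1^-}\frac{\log\int_{-\pi}^{\pi}|[f'(re^{i\theta})]^\tau|d\theta}{|\log(1-r)|}$. *)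

(* Defs.v *)
From Stdlib Require Import Reals.
From Coquelicot Require Export Coquelicot.
Open Scope R_scope.

Definition Cexp (z : C) : C := (exp (fst z) * cos (snd z), exp (fst z) * sin (snd z)).

Definition Cderiv (f : C -> C) (z l : C) : Prop :=
  is_derive (K := C_AbsRing) (V := C_NormedModule) f z l.

Definition in_disc (z : C) : Prop := Cmod z < 1.

Definition classS (f : C -> C) : Prop :=
  (forall z, in_disc z -> ex_derive (K := C_AbsRing) (V := C_NormedModule) f z) /\
  (forall z w, in_disc z -> in_disc w -> f z = f w -> z = w) /\
  f 0 = 0 /\ Cderiv f 0 1.

Definition polar (r t : R) : C := (r * cos t, r * sin t).

Definition limsup_left1 (h : R -> R) : Rbar :=
  Rbar_glb (fun s : Rbar => exists d, 0 < d < 1 /\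
     s = Lub_Rbar (fun y => exists r, 1 - d < r < 1 /\ y = h r)).

(* beta_f(tau), given the branch L = log f' on the disc with L(0)=0;
   |[f'(z)]^tau| = |exp(tau * L z)| *)
Definition beta (L : C -> C) (tau : C) : Rbar :=
  limsup_left1 (fun r =>
    ln (RInt (fun t => Cmod (Cexp (tau * L (polar r t)))) (- PI) PI)
    / Rabs (ln (1 - r))).

Definition log_deriv_data (f f1 f2 L : C -> C) : Prop :=
  (forall z, in_disc z -> Cderiv f z (f1 z)) /\
  (forall z, in_disc z -> Cderiv f1 z (f2 z)) /\
  (forall z, in_disc z -> Cderiv L z (f2 z / f1 z)) /\
  (forall z, in_disc z -> Cexp (L z) = f1 z) /\
  L 0 = 0.

Definition Npre (f1 f2 : C -> C) (z : C) : C := f2 z / f1 z.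

(* Main.v *)
Require Import Defs.
From Stdlib Require Import Reals Lra.
From Coquelicot Require Import Coquelicot.
Open Scope R_scope.

Lemma Cderiv_eps (L : C -> C) (z l : C) : Cderiv L z l ->
  forall e, 0 < e -> exists d, 0 < d /\ forall w, Cmod (w - z) < d ->
    Cmod (L w - L z - l * (w - z)) <= e * Cmod (w - z).
Proof.
  intros [_ H] e He.

  specialize (H z (fun P HP => HP) (mkposreal e He)).
  destruct H as [d Hd].
  exists d; split; [apply cond_pos|].
  intros w Hw.
  specialize (Hd w Hw).
  simpl in Hd. unfold Cminus.
  replace (L w + - L z + - (l * (w + - z)))%C with (minus (minus (L w) (L z)) (scal (minus w z) l)).
  exact Hd.
  unfold minus, plus, opp, scal; simpl. unfold mult; simpl. ring. Qed.


Lemma sqrt2_lt2 : sqrt 2 < 2.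
Proof.
  rewrite <- (sqrt_square 2) at 2 by lra.
  apply sqrt_lt_1; lra.
Qed.

Lemma fst_le_Cmod (c : C) : Rabs (fst c) <= Cmod c.
Proof. exact (re_le_Cmod c). Qed.

Lemma Cdiff2 (L : C -> C) (tau z l : C) : Cderiv L z l ->
  differentiable_pt_lim (fun u v => fst (tau * L (u, v))%C) (fst z) (snd z)
    (fst (tau * l)%C) (- snd (tau * l)%C).
Proof.
  intros HD eps.
  set (e' := eps / (2 * (Cmod tau + 1))).
  assert (Hct : 0 <= Cmod tau) by apply Cmod_ge_0.
  assert (He' : 0 < e').
  { unfold e'. apply Rdiv_lt_0_compat; [apply cond_pos | lra]. }
  destruct (Cderiv_eps L z l HD e' He') as [d [Hd H]].
  assert (Hd2 : 0 < d / 2) by lra.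
  exists (mkposreal _ Hd2). intros u v Hu Hv. simpl in Hu, Hv. cbv beta.
  set (w := (u, v)).
  assert (Hm : Rmax (Rabs (fst (w - z)%C)) (Rabs (snd (w - z)%C)) = Rmax (Rabs (u - fst z)) (Rabs (v - snd z))).
  { reflexivity. }
  assert (HC : Cmod (w - z) <= 2 * Rmax (Rabs (u - fst z)) (Rabs (v - snd z))).
  { rewrite <- Hm. eapply Rle_trans; [apply Cmod_2Rmax|].
    apply Rmult_le_compat_r; [|left; apply sqrt2_lt2].
    eapply Rle_trans; [apply Rabs_pos| apply Rmax_l]. }
  assert (Hlt : Cmod (w - z) < d).
  { eapply Rle_lt_trans; [exact HC|].
    assert (Rmax (Rabs (u - fst z)) (Rabs (v - snd z)) < d/2) by (apply Rmax_lub_lt; lra). lra. }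
  specialize (H w Hlt).
  match goal with |- Rabs ?X <= _ => assert (EQ : X = fst (tau * (L w - L z - l * (w - z)))%C) end.
  {  destruct z as [x y]. unfold w. simpl.
      destruct (L (u,v)) as [a b]; destruct (L (x,y)) as [a' b']; destruct tau as [t1 t2];
      destruct l as [l1 l2]; simpl; ring. }
  rewrite EQ.
  eapply Rle_trans; [apply fst_le_Cmod|].
  rewrite Cmod_mult.
  eapply Rle_trans.
  { apply Rmult_le_compat_l; [exact Hct| exact H]. }
  assert (Hmx : 0 <= Rmax (Rabs (u - fst z)) (Rabs (v - snd z))).
  { eapply Rle_trans; [apply Rabs_pos| apply Rmax_l]. }
  assert (Cmod tau * (e' * Cmod (w - z)) <= Cmod tau * (e' * (2 * Rmax (Rabs (u - fst z)) (Rabs (v - snd z))))).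
  { apply Rmult_le_compat_l; [lra|]. apply Rmult_le_compat_l; lra. }
  eapply Rle_trans; [exact H0|].
  replace (Cmod tau * (e' * (2 * Rmax (Rabs (u - fst z)) (Rabs (v - snd z)))))
    with ((Cmod tau / (Cmod tau + 1)) * (eps * Rmax (Rabs (u - fst z)) (Rabs (v - snd z)))).
  2:{ unfold e'. field. lra. }
  assert (0 <= eps * Rmax (Rabs (u - fst z)) (Rabs (v - snd z))).
  { apply Rmult_le_pos; [left; apply cond_pos| exact Hmx]. }
  assert (Cmod tau / (Cmod tau + 1) <= 1).
  { apply Rmult_le_reg_r with (Cmod tau + 1); [lra|].
    unfold Rdiv. rewrite Rmult_assoc, Rinv_l; lra. }
  nra.
Qed.

Lemma curve_deriv (L : C -> C) (tau : C) (X Y : R -> R) (s dx dy : R) (l : C) :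
  Cderiv L (X s, Y s) l -> derivable_pt_lim X s dx -> derivable_pt_lim Y s dy ->
  derivable_pt_lim (fun s => fst (tau * L (X s, Y s))%C) s (fst (tau * l * (dx, dy))%C).
Proof.
  intros HL HX HY.
  pose proof (Cdiff2 L tau (X s, Y s) l HL) as H2. simpl in H2.
  pose proof (derivable_pt_lim_comp_2d (fun u v => fst (tau * L (u, v))%C) X Y s _ _ dx dy H2 HX HY) as H.
  replace (fst (tau * l * (dx, dy))%C) with (fst (tau * l)%C * dx + - snd (tau * l)%C * dy).
  exact H.
  destruct tau as [a b]; destruct l as [p q]; simpl; ring.
Qed.

Lemma Cmod_polar (r t : R) : Cmod (polar r t) = Rabs r.
Proof.
  unfold Cmod, polar; cbn [fst snd].
  replace ((r * cos t) ^ 2 + (r * sin t) ^ 2) with (r ^ 2 * (sin t ^ 2 + cos t ^ 2)) by ring.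
  assert (E : sin t ^ 2 + cos t ^ 2 = 1) by (rewrite <- (sin2_cos2 t); unfold Rsqr; ring).
  rewrite E, Rmult_1_r. rewrite <- sqrt_Rsqr_abs. unfold Rsqr. f_equal. ring.
Qed.

Lemma Cmod_Cexp (w : C) : Cmod (Cexp w) = exp (fst w).
Proof.
  unfold Cmod, Cexp; cbn [fst snd].
  replace ((exp (fst w) * cos (snd w)) ^ 2 + (exp (fst w) * sin (snd w)) ^ 2)
    with (exp (fst w) ^ 2 * (sin (snd w) ^ 2 + cos (snd w) ^ 2)) by ring.
  assert (E : sin (snd w) ^ 2 + cos (snd w) ^ 2 = 1) by (rewrite <- (sin2_cos2 (snd w)); unfold Rsqr; ring).
  rewrite E, Rmult_1_r.
  replace (exp (fst w) ^ 2) with (Rsqr (exp (fst w))) by (unfold Rsqr; ring).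
  apply sqrt_Rsqr. left; apply exp_pos.
Qed.

Lemma fst_mul_unit_le (w : C) (t : R) : fst (w * (cos t, sin t))%C <= Cmod w.
Proof.
  eapply Rle_trans; [apply Rle_abs|]. eapply Rle_trans; [apply fst_le_Cmod|].
  rewrite Cmod_mult. 
  assert (Cmod (cos t, sin t) = 1).
  { pose proof (Cmod_polar 1 t) as H. unfold polar in H. rewrite !Rmult_1_l in H. rewrite H. apply Rabs_R1. }
  rewrite H. lra.
Qed.

Lemma ray_deriv (L D : C -> C) (tau : C) (t s : R) :
  (forall z, in_disc z -> Cderiv L z (D z)) -> Rabs s < 1 ->
  derivable_pt_lim (fun s => fst (tau * L (polar s t))%C) s
    (fst (tau * D (polar s t) * (cos t, sin t))%C).
Proof.
  intros HD Hs.
  assert (Hz : in_disc (polar s t)) by (unfold in_disc; rewrite Cmod_polar; exact Hs).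
  pose proof (curve_deriv L tau (fun s => s * cos t) (fun s => s * sin t) s (1 * cos t) (1 * sin t)
    (D (polar s t)) (HD _ Hz)
    (derivable_pt_lim_scal_right id s 1 (cos t) (derivable_pt_lim_id s))
    (derivable_pt_lim_scal_right id s 1 (sin t) (derivable_pt_lim_id s))) as H.
  rewrite !Rmult_1_l in H. exact H.
Qed.

Lemma circle_deriv (L D : C -> C) (tau : C) (r t : R) :
  (forall z, in_disc z -> Cderiv L z (D z)) -> Rabs r < 1 ->
  derivable_pt_lim (fun t => fst (tau * L (polar r t))%C) t
    (fst (tau * D (polar r t) * ((r * - sin t)%R, (r * cos t)%R))%C).
Proof.
  intros HD Hs.
  assert (Hz : in_disc (polar r t)) by (unfold in_disc; rewrite Cmod_polar; exact Hs).
  exact (curve_deriv L tau (fun t => r * cos t) (fun t => r * sin t) t (r * - sin t) (r * cos t)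
    (D (polar r t)) (HD _ Hz)
    (derivable_pt_lim_scal cos r t _ (derivable_pt_lim_cos t))
    (derivable_pt_lim_scal sin r t _ (derivable_pt_lim_sin t))).
Qed.

Lemma circle_cont (L D : C -> C) (tau : C) (r t : R) :
  (forall z, in_disc z -> Cderiv L z (D z)) -> Rabs r < 1 ->
  continuity_pt (fun t => fst (tau * L (polar r t))%C) t.
Proof.
  intros HD Hs. apply derivable_continuous_pt.
  exists (fst (tau * D (polar r t) * ((r * - sin t)%R, (r * cos t)%R))%C).
  apply circle_deriv; assumption.
Qed.

Lemma stepA (L1 L2 D1 D2 : C -> C) (tau : C) (cb r0 t rho r : R) :
  (forall z, in_disc z -> Cderiv L1 z (D1 z)) ->
  (forall z, in_disc z -> Cderiv L2 z (D2 z)) ->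
  (forall z, r0 < Cmod z < 1 -> Cmod (D2 z - D1 z) * (1 - Cmod z ^ 2) <= cb) ->
  0 <= cb -> 0 <= r0 -> r0 < rho -> rho <= r -> r < 1 ->
  fst (tau * L2 (polar r t))%C - fst (tau * L1 (polar r t))%C + Cmod tau * cb * ln (1 - r)
  <= fst (tau * L2 (polar rho t))%C - fst (tau * L1 (polar rho t))%C + Cmod tau * cb * ln (1 - rho).
Proof.
  intros H1 H2 Hb Hcb Hr0 Hrho Hr Hr1.
  destruct (Req_dec rho r) as [E|Hne]; [subst; lra|].
  set (G := fun s => fst (tau * L2 (polar s t))%C - fst (tau * L1 (polar s t))%C + Cmod tau * cb * ln (1 - s)).
  set (G' := fun s => fst (tau * D2 (polar s t) * (cos t, sin t))%C - fst (tau * D1 (polar s t) * (cos t, sin t))%C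
      + Cmod tau * cb * (- / (1 - s))).
  assert (HG : forall s, rho <= s <= r -> derivable_pt_lim G s (G' s)).
  { intros s Hs.
    assert (Has : Rabs s < 1) by (rewrite Rabs_right; lra).
    apply derivable_pt_lim_plus.
    - apply derivable_pt_lim_minus; apply ray_deriv; assumption.
    - apply is_derive_Reals. auto_derive. lra. field. lra. }
  destruct (MVT_cor2 G G' rho r ltac:(lra) HG) as [x [Ex Hx]].
  change (G r <= G rho).
  assert (G' x <= 0).
  { unfold G'.
    set (z := polar x t).
    assert (Hcz : Cmod z = x) by (unfold z; rewrite Cmod_polar, Rabs_right; lra).
    replace (fst (tau * D2 z * (cos t, sin t))%C - fst (tau * D1 z * (cos t, sin t))%C)
      with (fst (tau * (D2 z - D1 z) * (cos t, sin t))%C).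
    2:{ destruct tau, (D2 z), (D1 z); simpl; ring. }
    pose proof (fst_mul_unit_le (tau * (D2 z - D1 z)) t) as Hf.
    rewrite Cmod_mult in Hf.
    specialize (Hb z ltac:(lra)). rewrite Hcz in Hb.
    assert (HD0 : 0 <= Cmod (D2 z - D1 z)) by apply Cmod_ge_0.
    assert (Ht0 : 0 <= Cmod tau) by apply Cmod_ge_0.
    assert (Hb' : Cmod (D2 z - D1 z) * (1 - x) <= cb) by nra.
    assert (Cmod tau * Cmod (D2 z - D1 z) * (1 - x) <= Cmod tau * cb) by nra.
    assert (Cmod tau * Cmod (D2 z - D1 z) <= Cmod tau * cb / (1 - x)).
    { apply Rmult_le_reg_r with (1 - x); [lra|].
      replace (Cmod tau * cb / (1 - x) * (1 - x)) with (Cmod tau * cb) by (field; lra). lra. }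
    unfold Rdiv in H0. rewrite <- Ropp_mult_distr_r. lra. }
  assert (0 < r - rho) by lra.
  nra.
Qed.

Definition phi (tau : C) (L : C -> C) (r t : R) : R := fst (tau * L (polar r t))%C.

Definition Qf (L : C -> C) (tau : C) (r : R) : R :=
  ln (RInt (fun t => Cmod (Cexp (tau * L (polar r t))%C)) (- PI) PI) / Rabs (ln (1 - r)).

Lemma beta_Qf L tau : beta L tau = limsup_left1 (Qf L tau).
Proof. reflexivity. Qed.

Lemma exp_phi_cont (L D : C -> C) (tau : C) (r t : R) :
  (forall z, in_disc z -> Cderiv L z (D z)) -> Rabs r < 1 ->
  continuity_pt (fun t => exp (phi tau L r t)) t.
Proof.
  intros HD Hr. apply derivable_continuous_pt.
  eexists. apply (derivable_pt_lim_comp (fun t => phi tau L r t) exp).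
  - apply circle_deriv; eassumption.
  - apply derivable_pt_lim_exp.
Qed.

Lemma RInt_pos (f : R -> R) : (forall t, continuity_pt f t) -> (forall t, 0 < f t) ->
  0 < RInt f (- PI) PI.
Proof.
  intros Hc Hp. apply RInt_gt_0.
  - pose proof PI_RGT_0; lra.
  - intros; apply Hp.
  - intros x _. apply continuity_pt_filterlim, Hc.
Qed.

Lemma RInt_ex (f : R -> R) : (forall t, continuity_pt f t) -> ex_RInt f (- PI) PI.
Proof.
  intros Hc. apply (@ex_RInt_continuous R_CompleteNormedModule). intros z _. apply continuity_pt_filterlim, Hc.
Qed.

Lemma Qf_eq (L : C -> C) tau r :
  Qf L tau r = ln (RInt (fun t => exp (phi tau L r t)) (- PI) PI) / Rabs (ln (1 - r)).
Proof.
  unfold Qf. f_equal. f_equal. apply RInt_ext. intros x _. rewrite Cmod_Cexp. reflexivity.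
Qed.

Lemma exp_le_mono x y : x <= y -> exp x <= exp y.
Proof. intros [H|H]; [left; apply exp_increasing; exact H | subst; lra]. Qed.

Lemma ln_neg r : 0 < r < 1 -> ln (1 - r) < 0.
Proof. intros H. rewrite <- ln_1. apply ln_increasing; lra. Qed.

Lemma stepE (L1 L2 D1 D2 : C -> C) (tau : C) (cb r0 : R) :
  (forall z, in_disc z -> Cderiv L1 z (D1 z)) ->
  (forall z, in_disc z -> Cderiv L2 z (D2 z)) ->
  (forall z, r0 < Cmod z < 1 -> Cmod (D2 z - D1 z) * (1 - Cmod z ^ 2) <= cb) ->
  0 <= cb -> 0 <= r0 < 1 ->
  exists rho A, r0 < rho < 1 /\ forall r, rho <= r < 1 ->
    Qf L2 tau r <= Qf L1 tau r + Cmod tau * cb + A / Rabs (ln (1 - r)).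
Proof.
  intros H1 H2 Hb Hcb Hr0.
  set (rho := (r0 + 1) / 2).
  assert (Hrho : r0 < rho < 1) by (unfold rho; lra).
  assert (Hrho' : Rabs rho < 1) by (rewrite Rabs_right; lra).
  assert (HPI := PI_RGT_0).
  destruct (continuity_ab_maj (fun t => phi tau L2 rho t - phi tau L1 rho t) (- PI) PI ltac:(lra)) as [Mx [HM _]].
  { intros c _. apply continuity_pt_minus; eapply circle_cont; eassumption. }
  set (M := phi tau L2 rho Mx - phi tau L1 rho Mx) in HM.
  set (K := Cmod tau * cb).
  exists rho, (M + K * ln (1 - rho)). split; [exact Hrho|].
  intros r Hr.
  assert (Hr' : Rabs r < 1) by (rewrite Rabs_right; lra).
  set (B := M + K * ln (1 - rho) - K * ln (1 - r)).
  assert (Hpt : forall t, - PI <= t <= PI -> exp (phi tau L2 r t) <= exp B * exp (phi tau L1 r t)).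
  { intros t Ht. rewrite <- exp_plus. apply exp_le_mono.
    pose proof (stepA L1 L2 D1 D2 tau cb r0 t rho r H1 H2 Hb Hcb ltac:(lra) ltac:(lra) ltac:(lra) ltac:(lra)) as HA.
    specialize (HM t Ht). cbv beta in HM. unfold phi in *. unfold B, K. lra. }
  assert (Hc1 : forall t, continuity_pt (fun t => exp (phi tau L1 r t)) t) by (intros; eapply exp_phi_cont; eassumption).
  assert (Hc2 : forall t, continuity_pt (fun t => exp (phi tau L2 r t)) t) by (intros; eapply exp_phi_cont; eassumption).
  assert (HI1 := RInt_pos _ Hc1 (fun t => exp_pos _)).
  assert (HI2 := RInt_pos _ Hc2 (fun t => exp_pos _)).
  assert (Hle : RInt (fun t => exp (phi tau L2 r t)) (- PI) PI <=
                exp B * RInt (fun t => exp (phi tau L1 r t)) (- PI) PI).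
  { assert (E : RInt (fun t => exp B * exp (phi tau L1 r t)) (- PI) PI =
                exp B * RInt (fun t => exp (phi tau L1 r t)) (- PI) PI).
    { apply (RInt_scal (V := R_CompleteNormedModule)). apply RInt_ex, Hc1. }
    rewrite <- E. apply RInt_le; [lra | apply RInt_ex, Hc2 | |].
    - apply RInt_ex. intros t. apply (continuity_pt_scal (fun t => exp (phi tau L1 r t))). apply Hc1.
    - intros t Ht. apply Hpt. lra. }
  assert (Hln : ln (RInt (fun t => exp (phi tau L2 r t)) (- PI) PI) <=
                B + ln (RInt (fun t => exp (phi tau L1 r t)) (- PI) PI)).
  { rewrite <- (ln_exp B) at 1. rewrite <- ln_mult by (try apply exp_pos; exact HI1).
    apply ln_le; assumption. }
  rewrite !Qf_eq.
  assert (HX := ln_neg r ltac:(lra)).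
  rewrite Rabs_left by exact HX.
  set (X := - ln (1 - r)) in *.
  assert (HX' : 0 < X) by (unfold X; lra).
  unfold B in Hln.
  assert (EKX : K * ln (1 - r) = - (K * X)) by (unfold X; ring).
  apply Rmult_le_reg_r with X; [exact HX'|].
  unfold Rdiv. rewrite !Rmult_plus_distr_r, !Rmult_assoc, !Rinv_l by lra. lra.
Qed.

Lemma glb_correct (E : Rbar -> Prop) : Rbar_is_glb E (Rbar_glb E).
Proof. unfold Rbar_glb. destruct (Rbar_ex_glb E) as [l Hl]. exact Hl. Qed.

Lemma Rbar_shift (x y : Rbar) (e : R) :
  Rbar_le (Rbar_minus x e) y -> Rbar_le x (Rbar_plus y e).
Proof. destruct x, y; simpl; auto; lra. Qed.

Lemma Rbar_shift' (x y : Rbar) (e : R) :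
  Rbar_le x (Rbar_plus y e) -> Rbar_le (Rbar_minus x e) y.
Proof. destruct x, y; simpl; auto; lra. Qed.

Definition Sup_d (h : R -> R) (d : R) : Rbar :=
  Lub_Rbar (fun y => exists r, 1 - d < r < 1 /\ y = h r).

Lemma Sup_ub (h : R -> R) d r : 1 - d < r < 1 -> Rbar_le (h r) (Sup_d h d).
Proof. intros Hr. unfold Sup_d. apply (proj1 (Lub_Rbar_correct _)). exists r; auto. Qed.

Lemma Sup_mono (h : R -> R) d d' : d <= d' -> Rbar_le (Sup_d h d) (Sup_d h d').
Proof.
  intros Hd. apply (proj2 (Lub_Rbar_correct _)).
  intros y [r [Hr ->]]. apply Sup_ub. lra.
Qed.

Lemma limsup_mono (h1 h2 : R -> R) (e d0 : R) : 0 < d0 < 1 ->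
  (forall r, 1 - d0 < r < 1 -> h2 r <= h1 r + e) ->
  Rbar_le (limsup_left1 h2) (Rbar_plus (limsup_left1 h1) e).
Proof.
  intros Hd0 Hh.
  assert (H4 : forall d, 0 < d <= d0 -> Rbar_le (Sup_d h2 d) (Rbar_plus (Sup_d h1 d) e)).
  { intros d Hd. apply (proj2 (Lub_Rbar_correct _)).
    intros y [r [Hr ->]].
    assert (Hu := Sup_ub h1 d r Hr).
    specialize (Hh r ltac:(lra)).
    destruct (Sup_d h1 d) as [s| |]; simpl in *; auto; lra. }
  assert (H6 : forall d, 0 < d < 1 -> Rbar_le (limsup_left1 h2) (Rbar_plus (Sup_d h1 d) e)).
  { intros d Hd.
    set (d' := Rmin d d0).
    assert (Hd' : 0 < d' <= d0 /\ d' <= d) by (unfold d'; split; [split; [apply Rmin_glb_lt; lra | apply Rmin_r] | apply Rmin_l]).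
    eapply Rbar_le_trans.
    { apply (proj1 (glb_correct _)). exists d'. split; [lra|reflexivity]. }
    eapply Rbar_le_trans; [apply H4; lra|].
    apply Rbar_plus_le_compat; [apply Sup_mono; lra| apply Rbar_le_refl]. }
  apply Rbar_shift.
  apply (proj2 (glb_correct _)).
  intros x [d [Hd ->]]. apply Rbar_shift'. apply H6. exact Hd.
Qed.

Lemma one_side (L1 L2 D1 D2 : C -> C) (tau : C) (eps r0 c : R) :
  (forall z, in_disc z -> Cderiv L1 z (D1 z)) ->
  (forall z, in_disc z -> Cderiv L2 z (D2 z)) ->
  (forall z, r0 < Cmod z < 1 -> Cmod (D2 z - D1 z) * (1 - Cmod z ^ 2) <= c) ->
  c < eps / Cmod tau -> tau <> 0 -> 0 < r0 < 1 ->
  Rbar_le (beta L2 tau) (Rbar_plus (beta L1 tau) eps).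
Proof.
  intros H1 H2 Hb Hc Ht Hr0.
  assert (Hc0 : 0 <= c).
  { set (z := polar ((r0 + 1) / 2) 0).
    assert (Hz : Cmod z = (r0 + 1) / 2) by (unfold z; rewrite Cmod_polar, Rabs_right; lra).
    specialize (Hb z). rewrite Hz in Hb. specialize (Hb ltac:(lra)).
    assert (0 <= Cmod (D2 z - D1 z)) by apply Cmod_ge_0.
    assert (0 < 1 - ((r0 + 1) / 2) ^ 2) by nra. nra. }
  assert (Htp : 0 < Cmod tau).
  { destruct (Cmod_ge_0 tau) as [H|H]; auto. exfalso. apply Ht. apply Cmod_eq_0. auto. }
  set (K := Cmod tau * c).
  assert (HK : K < eps).
  { unfold K. apply Rmult_lt_compat_l with (r := Cmod tau) in Hc; [|exact Htp].
    replace (Cmod tau * (eps / Cmod tau)) with eps in Hc by (field; lra). exact Hc. }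
  assert (HK0 : 0 <= K) by (unfold K; apply Rmult_le_pos; lra).
  destruct (stepE L1 L2 D1 D2 tau c r0 H1 H2 Hb Hc0 ltac:(lra)) as [rho [A [Hrho HE]]].
  set (T := Rabs A / (eps - K)).
  assert (HT : 0 <= T) by (unfold T; apply Rdiv_le_0_compat; [apply Rabs_pos | lra]).
  set (d0 := Rmin (1 - rho) (exp (- T))).
  assert (Hd0 : 0 < d0 < 1).
  { unfold d0. split. apply Rmin_glb_lt; [lra | apply exp_pos].
    eapply Rle_lt_trans; [apply Rmin_l| lra]. }
  rewrite !beta_Qf.
  apply (limsup_mono _ _ eps d0 Hd0).
  intros r Hr.
  assert (Hrr : rho <= r < 1).
  { split; [|lra]. assert (d0 <= 1 - rho) by apply Rmin_l. lra. }
  specialize (HE r Hrr).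
  assert (Hlt : ln (1 - r) < - T).
  { rewrite <- (ln_exp (- T)). apply ln_increasing; [lra|].
    assert (d0 <= exp (- T)) by apply Rmin_r. lra. }
  assert (HX : Rabs (ln (1 - r)) > T).
  { rewrite Rabs_left by lra. lra. }
  assert (A / Rabs (ln (1 - r)) <= eps - K).
  { apply Rmult_le_reg_r with (Rabs (ln (1 - r))); [lra|].
    replace (A / Rabs (ln (1 - r)) * Rabs (ln (1 - r))) with A by (field; lra).
    assert (Rabs A = T * (eps - K)) by (unfold T; field; lra).
    assert (A <= Rabs A) by apply Rle_abs.
    nra. }
  fold K in HE. lra.
Qed.

Theorem mainTheorem11
  (f g f1 f2 g1 g2 Lf Lg : C -> C) (tau : C)
  (hf : classS f) (hg : classS g)
  (hfd : log_deriv_data f f1 f2 Lf) (hgd : log_deriv_data g g1 g2 Lg)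
  (htau : tau <> 0) :
  (forall eps r0 : R,
     Rbar_lt 0 (beta Lf tau) -> 0 < eps -> Rbar_lt eps (beta Lf tau) ->
     0 < r0 < 1 ->
     (exists c, c < eps / Cmod tau /\
        forall z, r0 < Cmod z < 1 ->
          Cmod (Npre g1 g2 z - Npre f1 f2 z) * (1 - Cmod z ^ 2) <= c) ->
     Rbar_le (Rbar_minus (beta Lf tau) eps) (beta Lg tau) /\
     Rbar_le (beta Lg tau) (Rbar_plus (beta Lf tau) eps)) /\
  (forall eps r0 : R,
     beta Lf tau = Finite 0 -> 0 < eps -> 0 < r0 < 1 ->
     (exists c, c < eps / Cmod tau /\
        forall z, r0 < Cmod z < 1 ->
          Cmod (Npre g1 g2 z - Npre f1 f2 z) * (1 - Cmod z ^ 2) <= c) ->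
     Rbar_le (beta Lg tau) eps).
Proof.
  destruct hfd as [_ [_ [HLf _]]]. destruct hgd as [_ [_ [HLg _]]].
  split.
  - intros eps r0 _ _ _ Hr0 [c [Hc Hb]]. split.
    + apply Rbar_shift'.
      apply (one_side Lg Lf (Npre g1 g2) (Npre f1 f2) tau eps r0 c HLg HLf); auto.
      intros z Hz. rewrite <- Cmod_opp.
      replace (- (Npre f1 f2 z - Npre g1 g2 z))%C with (Npre g1 g2 z - Npre f1 f2 z)%C by ring.
      apply Hb; exact Hz.
    + apply (one_side Lf Lg (Npre f1 f2) (Npre g1 g2) tau eps r0 c HLf HLg); auto.
  - intros eps r0 H0 _ Hr0 [c [Hc Hb]].
    pose proof (one_side Lf Lg (Npre f1 f2) (Npre g1 g2) tau eps r0 c HLf HLg Hb Hc htau Hr0) as H.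
    rewrite H0 in H. simpl in H. rewrite Rplus_0_l in H. exact H.
Qed.
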